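(* Let $\alpha>0$, $\delta\ge0$ with $\alpha+\delta\le\pi$, and let $f$ be a spectral density on $\Lambda$ such that $f(\lambda)=0$ whenever $e^{i\lambda}\notin\Gamma_{\alpha,\delta}$. Then for every $n\in\mathbb N$, $$\sigma_n^2(f)\le 4c\,(\sin(\alpha/2))^{n-1}(\sin(\alpha/2+\delta))^{n-1},$$ where $c=r(0)=\int_\Lambda f(\lambda)\,d\lambda$.
   Context: $\Lambda=[-\pi,\pi]$. A spectral density is $f\ge0$, $f\in L^1(\Lambda)$, positive on a set of positive measure, with covariances $r(t)=\int_\Lambda e^{-it\lambda}f(\lambda)d\lambda$. $\sigma_n^2(f)=\min_{c_1,\dots,c_n\in\mathbb C}\int_\Lambda|1-\sum_{k=1}^n c_ke^{-ik\lambda}|^2f(\lambda)\,d\lambda$. $\Gamma_{\alpha,\delta}=\{e^{i\theta}:\theta\in[-(\delta+\alpha),-\delta]\cup[\delta,\delta+\alpha]\}$ (two arcs of length $\alpha$ at circular distance $2\delta$; for $\delta=0$ a single arc of length $2\alpha$). *)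

(* Defs.v *)
From HB Require Import structures.
From mathcomp Require Import all_boot all_order all_algebra.
From mathcomp Require Import all_classical all_reals all_analysis.
Set Implicit Arguments. Unset Strict Implicit. Unset Printing Implicit Defensive.
Import Order.TTheory GRing.Theory Num.Theory.
Local Open Scope ring_scope.
Local Open Scope classical_set_scope.

Section Defs.
Variable R : realType.

(* Complex coefficients c_k = a k + i b k, k = 1..n (index k : 'I_n stands for k+1).
   e^{-i m l} = cos(m l) - i sin(m l), so
   c_k e^{-ikl} = (a cos + b sin) + i (b cos - a sin). *)
Definition re_err (n : nat) (a b : 'I_n -> R) (l : R) : R :=
  1 - \sum_(k < n) (a k * cos (k.+1%:R * l) + b k * sin (k.+1%:R * l)).
Definition im_err (n : nat) (a b : 'I_n -> R) (l : R) : R :=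
  - \sum_(k < n) (b k * cos (k.+1%:R * l) - a k * sin (k.+1%:R * l)).
Definition err2 (n : nat) (a b : 'I_n -> R) (l : R) : R :=
  re_err a b l ^+ 2 + im_err a b l ^+ 2.

(* sigma_n^2(f) = min over c_1..c_n in C of int_{[-pi,pi]} |1 - sum c_k e^{-ikl}|^2 f(l) dl
   (stated as an infimum in \bar R). *)
Definition sigma2 (n : nat) (f : R -> R) : \bar R :=
  ereal_inf [set y | exists a b : 'I_n -> R,
     y = (\int[lebesgue_measure]_(x in `[(- pi)%R, pi%R]) (err2 a b x * f x)%:E)%E].

Definition in_Gamma (alpha delta l : R) : Prop :=
  exists theta : R,
    (theta \in `[- (delta + alpha), - delta] \/ theta \in `[delta, delta + alpha]) /\
    cos theta = cos l /\ sin theta = sin l.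

Definition spectral_density (f : R -> R) : Prop :=
  (forall x, 0 <= f x) /\
  lebesgue_measure.-integrable `[(- pi)%R, pi%R] (fun x => (f x)%:E) /\
  (0 < lebesgue_measure ([set x | x \in `[(- pi)%R, pi%R]] `&` [set x | (0 < f x)%R]))%E.

End Defs.

(* Main.v *)
Require Import Defs.
From mathcomp Require Import all_boot all_order all_algebra.
From mathcomp Require Import all_classical all_reals all_analysis.
From mathcomp Require Import complex ring lra zify.
Import Order.TTheory GRing.Theory Num.Theory.
Set Implicit Arguments. Unset Strict Implicit. Unset Printing Implicit Defensive.
Local Open Scope ring_scope.

Section Alg.
Variable R : realType.
Definition mkC (x y : R) : R[i] := Complex x y.
Definition rc (r : R) : R[i] := mkC r 0.
Definition wl (l : R) : R[i] := mkC (cos l) (- sin l).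

Lemma mkC_mul (a b c d : R) : mkC a b * mkC c d = mkC (a*c - b*d) (a*d + b*c).
Proof. by []. Qed.
Lemma mkC_add (a b c d : R) : mkC a b + mkC c d = mkC (a+c) (b+d).
Proof. by []. Qed.
Lemma mkC_opp (a b : R) : - mkC a b = mkC (-a) (-b).
Proof. by []. Qed.
Lemma mkC_one : (1 : R[i]) = mkC 1 0. Proof. by []. Qed.
Lemma mkC_zero : (0 : R[i]) = mkC 0 0. Proof. by []. Qed.
Lemma mkC_eta (z : R[i]) : z = mkC (complex.Re z) (complex.Im z).
Proof. by case: z. Qed.
Lemma ReD (x y : R[i]) : complex.Re (x + y) = complex.Re x + complex.Re y.
Proof. by case: x; case: y. Qed.
Lemma ImD (x y : R[i]) : complex.Im (x + y) = complex.Im x + complex.Im y.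
Proof. by case: x; case: y. Qed.
Lemma rcM a b : rc (a * b) = rc a * rc b.
Proof. rewrite /rc mkC_mul; congr mkC; ring. Qed.
Lemma rcB a b : rc (a - b) = rc a - rc b.
Proof. rewrite /rc mkC_opp mkC_add; congr mkC; ring. Qed.

Lemma wX l k : wl l ^+ k = mkC (cos (k%:R * l)) (- sin (k%:R * l)).
Proof.
elim: k => [|k IH]; first by rewrite expr0 mul0r cos0 sin0 oppr0.
rewrite exprS IH /wl mkC_mul.
have -> : k.+1%:R * l = l + k%:R * l by rewrite -natr1 mulrDl mul1r addrC.
rewrite cosD sinD; congr mkC; ring.
Qed.

Lemma w2 l : wl l ^+ 2 + 1 = wl l * rc (2 * cos l).
Proof.
rewrite expr2 /wl /rc mkC_one !mkC_mul mkC_add; congr mkC; last by ring.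
have := cos2Dsin2 l; rewrite !expr2 => h; lra.
Qed.

Variables (m s2 : R).
Definition P2 : {poly R[i]} := 'X^2 - (rc (2 * m))%:P * 'X + 1.
Fixpoint Qp (k : nat) : {poly R[i]} * {poly R[i]} :=
  match k with
  | 0 => ((rc 2)%:P, P2)
  | k.+1 => let: (a, b) := Qp k in (b, P2 * b - (rc s2)%:P * 'X^2 * a)
  end.
Fixpoint Rp (x : R) (k : nat) : R * R :=
  match k with
  | 0 => (2, x)
  | k.+1 => let: (a, b) := Rp x k in (b, x * b - s2 * a)
  end.

Lemma Qp0 k : ((Qp k).2).[0] = 1.
Proof.
elim: k => [|k IH] /=; first by rewrite /P2 !hornerE expr0n /= subr0 add0r.
case: (Qp k) IH => a b /= IH.
by rewrite !hornerE IH /P2 !hornerE expr0n /= !mulr0 !mul0r !subr0 add0r.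
Qed.

Lemma size_P2 : (size P2 <= 3)%N.
Proof.
rewrite /P2; apply: (leq_trans (size_polyD _ _)).
rewrite geq_max size_poly1 andbT.
apply: (leq_trans (size_polyD _ _)); rewrite geq_max size_polyXn /= size_polyN.
apply: (leq_trans (size_polyMleq _ _)); rewrite size_polyX.
by have := size_polyC_leq1 (rc (2 * m)); case: (size _) => [|[]].
Qed.

Lemma size_Qp k : (size (Qp k).1 <= 2 * k + 1)%N /\ (size (Qp k).2 <= 2 * k + 3)%N.
Proof.
elim: k => [|k IH] /=; first by rewrite size_polyC_leq1 size_P2.
case: (Qp k) IH => a b /= [Ha Hb]; split; first by lia.
apply: (leq_trans (size_polyD _ _)); rewrite geq_max size_polyN; apply/andP; split.
  apply: (leq_trans (size_polyMleq _ _)); rewrite -subn1; apply: leq_trans (leq_sub2r 1 (leq_add size_P2 Hb)) _; lia.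
apply: (leq_trans (size_polyMleq _ _)).
have : (size (((rc s2)%:P * 'X^2)%R : {poly R[i]}) <= 3)%N.
  apply: (leq_trans (size_polyMleq _ _)); rewrite size_polyXn.
  by have := size_polyC_leq1 (rc s2); case: (size _) => [|[]].
move=> h; rewrite -subn1; apply: leq_trans (leq_sub2r 1 (leq_add h Ha)) _; lia.
Qed.

Lemma QR l k : let x := 2 * cos l - 2 * m in
  ((Qp k).1).[wl l] = wl l ^+ k * rc (Rp x k).1 /\
  ((Qp k).2).[wl l] = wl l ^+ k.+1 * rc (Rp x k).2.
Proof.
move=> x.
have HP : P2.[wl l] = wl l * rc x.
  rewrite /P2 !hornerE -addrA [_ + 1]addrC addrA w2 /x rcB; ring.
have e : wl l ^+ 2 - rc (2 * m) * wl l + 1 = wl l * rc x.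
  by rewrite -HP /P2 !hornerE.
elim: k => [|k IH] /=.
  by split; [rewrite hornerC expr0 mul1r | rewrite expr1 -HP].
case: (Qp k) (Rp x k) IH => a b [ra rb] /= [Ha Hb]; split => //.
have -> : rc (x * rb - s2 * ra) = rc x * rc rb - rc s2 * rc ra by rewrite rcB !rcM.
rewrite hornerD hornerN !hornerM hornerC hornerX Hb Ha HP !exprS; ring.
Qed.

Lemma Rcheb (s t : R) k : s2 = s ^+ 2 ->
  let x := 2 * s * cos t in
  (Rp x k).1 = 2 * s ^+ k * cos (k%:R * t) /\
  (Rp x k).2 = 2 * s ^+ k.+1 * cos (k.+1%:R * t).
Proof.
move=> hs x; elim: k => [|k IH] /=.
  by rewrite mulr1 expr1 mul1r mul0r cos0 mulr1; split.
case: (Rp x k) IH => a b /= [Ha Hb]; split => //.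
rewrite Ha Hb hs /x.
have e1 : k.+2%:R * t = k.+1%:R * t + t by rewrite -[k.+2]addn1 natrD mulrDl mul1r.
have e2 : k%:R * t = k.+1%:R * t - t by rewrite -[k.+1]addn1 natrD mulrDl mul1r addrK.
rewrite e1 e2 cosB cosD !exprS; ring.
Qed.
End Alg.

Section Err.
Variable R : realType.
Lemma Re0 : complex.Re (0 : R[i]) = 0. Proof. by []. Qed.
Lemma Im0 : complex.Im (0 : R[i]) = 0. Proof. by []. Qed.

Lemma err2E n (q : {poly R[i]}) l : (size q <= n.+1)%N -> q`_0 = 1 ->
  err2 (fun k : 'I_n => - complex.Re q`_k.+1) (fun k => - complex.Im q`_k.+1) l
  = complex.Re (q.[wl l]) ^+ 2 + complex.Im (q.[wl l]) ^+ 2.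
Proof.
move=> hs h0; rewrite /err2 (horner_coef_wide _ hs) big_ord_recl /= h0 expr0 mulr1.
rewrite ReD ImD (big_morph _ (@ReD R) Re0) (big_morph _ (@ImD R) Im0).
congr (_ ^+ 2 + _ ^+ 2).
  rewrite /re_err -sumrN; congr (_ + _); apply: eq_bigr => i _.
  rewrite /bump /= wX (mkC_eta q`_i.+1) mkC_mul /=; ring.
rewrite /im_err -sumrN /= add0r; apply: eq_bigr => i _.
rewrite /bump /= wX (mkC_eta q`_i.+1) mkC_mul /=; ring.
Qed.
End Err.

Section Trig.
Variable R : realType.

Lemma s_eq (al de : R) : (cos de - cos (de + al)) / 2 = sin (al / 2) * sin (al / 2 + de).
Proof.
have gen : forall A B : R, cos (A - B) - cos (A + B) = 2 * sin A * sin B.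
  by move=> A B; rewrite cosB cosD; ring.
have e1 : de = (al / 2 + de) - al / 2 by ring.
have e2 : de + al = (al / 2 + de) + al / 2 by field.
rewrite {1}e1 e2 gen; field; lra.
Qed.

Lemma cos_bound (al de l : R) : 0 < al -> 0 <= de -> al + de <= pi ->
  in_Gamma al de l -> cos (de + al) <= cos l <= cos de.
Proof.
move=> ha hd hp [th [hth [<- _]]].
have key : forall u, de <= u <= de + al -> cos (de + al) <= cos u <= cos de.
  move=> u /andP[h1 h2].
  have i0 : de \in `[0, pi] by rewrite in_itv /=; apply/andP; split; lra.
  have i1 : de + al \in `[0, pi] by rewrite in_itv /=; apply/andP; split; lra.
  have iu : u \in `[0, pi] by rewrite in_itv /=; apply/andP; split; lra.
  by rewrite !leNgt !ltr_cos // -!leNgt h1 h2.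
case: hth => /set_mem; rewrite /= in_itv /= => /andP[h1 h2].
  rewrite -[cos th]cosN; apply: key; apply/andP; split; lra.
by apply: key; apply/andP; split.
Qed.
End Trig.


Section Point.
Variable R : realType.
Definition sdef (al de : R) := (cos de - cos (de + al)) / 2.
Definition mdef (al de : R) := (cos de + cos (de + al)) / 2.
Definition qpoly (al de : R) (K : nat) : {poly R[i]} :=
  if K is 0 then 1 else (Qp (mdef al de) (sdef al de ^+ 2) K).1.
Definition aco (al de : R) n (k : 'I_n) := - complex.Re (qpoly al de n./2)`_k.+1.
Definition bco (al de : R) n (k : 'I_n) := - complex.Im (qpoly al de n./2)`_k.+1.

Lemma normw (l r : R) K :
  complex.Re (wl l ^+ K * rc r) ^+ 2 + complex.Im (wl l ^+ K * rc r) ^+ 2 = r ^+ 2.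
Proof.
rewrite wX /rc mkC_mul /=.
have := cos2Dsin2 (K%:R * l) => h.
transitivity (r ^+ 2 * (cos (K%:R * l) ^+ 2 + sin (K%:R * l) ^+ 2)); first ring.
by rewrite h mulr1.
Qed.

Lemma pointwise (al de l : R) n : 0 < al -> 0 <= de -> al + de <= pi -> (0 < n)%N ->
  in_Gamma al de l ->
  err2 (aco al de (n:=n)) (bco al de (n:=n)) l <=
  4 * sin (al / 2) ^+ n.-1 * sin (al / 2 + de) ^+ n.-1.
Proof.
move=> ha hd hp hn hG.
have hK1 : (2 * n./2 + 1 <= n.+1)%N by rewrite -[n in (_ <= n.+1)%N](odd_double_half n); case: (odd n); lia.
have hK2 : (n.-1 <= 2 * n./2)%N by rewrite -[n in (n.-1 <= _)%N](odd_double_half n); case: (odd n); lia.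
rewrite /aco /bco.
have hs : sdef al de = sin (al / 2) * sin (al / 2 + de) by rewrite /sdef s_eq.
have sa : 0 < sin (al / 2) by apply: sin_gt0_pi; apply/andP; split; lra.
have sb : 0 < sin (al / 2 + de) by apply: sin_gt0_pi; apply/andP; split; lra.
have sa1 := sin_le1 (al / 2); have sb1 := sin_le1 (al / 2 + de).
have s_pos : 0 < sdef al de by rewrite hs; nra.
have s_le1 : sdef al de <= 1 by rewrite hs; nra.
have hcb := cos_bound ha hd hp hG.
move: hK1 hK2; move: (n./2) => K hK1 hK2.
have hsize : (size (qpoly al de K) <= n.+1)%N.
  case: K hK1 hK2 => [|K] hK1 hK2 /=; first by rewrite size_poly1.
  by apply: leq_trans hK1; have [] := size_Qp (mdef al de) (sdef al de ^+ 2) K.+1.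
have h0 : (qpoly al de K)`_0 = 1.
  case: K {hK1 hK2 hsize} => [|K] /=; first by rewrite coef1.
  rewrite -horner_coef0; have := Qp0 (mdef al de) (sdef al de ^+ 2) K.
  by case: (Qp _ _ K).
rewrite err2E //.
have [r [hq hr]] : exists r, (qpoly al de K).[wl l] = wl l ^+ K * rc r /\
    r ^+ 2 <= 4 * sdef al de ^+ (2 * K).
  case: K {hK1 hK2 hsize h0} => [|K].
    by exists 1; split; [rewrite /= hornerC expr0 mul1r | rewrite expr1n muln0 expr0; lra].
  set s := sdef al de; set m := mdef al de.
  set x := 2 * cos l - 2 * m.
  have sp : 0 < s := s_pos.
  have hx1 : -1 <= x / (2 * s) <= 1.
    rewrite ler_pdivrMr ?ler_pdivlMr; try lra.
    by apply/andP; split; rewrite /x /m /s /sdef /mdef; lra.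
  set t := acos (x / (2 * s)).
  have hct : cos t = x / (2 * s) by rewrite /t; apply: acosK; rewrite in_itv /=.
  have hx : x = 2 * s * cos t by rewrite hct; field; lra.
  exists (Rp (s ^+ 2) x K.+1).1; split.
    by rewrite /qpoly (QR m (s ^+ 2) l K.+1).1.
  rewrite hx (@Rcheb _ (s ^+ 2) s t K.+1 (erefl _)).1.
  have := cos2Dsin2 (K.+1%:R * t) => hc.
  have hS : 0 <= s ^+ K.+1 by apply: exprn_ge0; lra.
  rewrite mulnC exprM; set S := s ^+ K.+1; set c := cos _ in hc *.
  have : 0 <= S ^+ 2 by apply: sqr_ge0.
  have : 0 <= sin (K.+1%:R * t) ^+ 2 by apply: sqr_ge0.
  rewrite !expr2 in hc * => h1 h2; nra.
rewrite hq normw; apply: (le_trans hr).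
rewrite -mulrA -exprMn -hs ler_pM2l; last lra.
by apply: ler_wiXn2l => //; lra.
Qed.
End Point.

Section Meas.
Variable R : realType.
Local Open Scope classical_set_scope.
Lemma meas_err2 n (a b : 'I_n -> R) : measurable_fun setT (err2 a b).
Proof.
have mc : forall c : R, measurable_fun setT (fun x : R => cos (c * x)).
  move=> c; exact: (measurableT_comp (measurable_realfun.continuous_measurable_fun (@continuous_cos R))
    (measurable_realfun.measurable_funM (measurable_cst c) (@measurable_id _ _ setT))).
have ms : forall c : R, measurable_fun setT (fun x : R => sin (c * x)).
  move=> c; exact: (measurableT_comp (measurable_realfun.continuous_measurable_fun (@continuous_sin R))
    (measurable_realfun.measurable_funM (measurable_cst c) (@measurable_id _ _ setT))).
rewrite /err2 /re_err /im_err.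
apply: measurable_realfun.measurable_funD; rewrite ?expr2; apply: measurable_realfun.measurable_funM.
- apply: measurable_realfun.measurable_funB; first exact: measurable_cst.
  apply: measurable_sum => i; apply: measurable_realfun.measurable_funD; apply: measurable_realfun.measurable_funM => //;
    exact: measurable_cst.
- apply: measurable_realfun.measurable_funB; first exact: measurable_cst.
  apply: measurable_sum => i; apply: measurable_realfun.measurable_funD; apply: measurable_realfun.measurable_funM => //;
    exact: measurable_cst.
- apply: measurable_realfun.measurable_funN.
  apply: measurable_sum => i; apply: measurable_realfun.measurable_funB; apply: measurable_realfun.measurable_funM => //;
    exact: measurable_cst.
- apply: measurable_realfun.measurable_funN.
  apply: measurable_sum => i; apply: measurable_realfun.measurable_funB; apply: measurable_realfun.measurable_funM => //;
    exact: measurable_cst.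
Qed.
End Meas.

Unset Implicit Arguments.

Theorem mainTheorem7 (R : realType) (alpha delta : R) (f : R -> R) (n : nat) :
  0 < alpha -> 0 <= delta -> alpha + delta <= pi ->
  spectral_density f ->
  (forall l, l \in `[(- pi), pi] -> ~ in_Gamma alpha delta l -> f l = 0) ->
  (0 < n)%N ->
  (sigma2 n f <=
     (4 * sin (alpha / 2) ^+ n.-1 * sin (alpha / 2 + delta) ^+ n.-1)%:E *
     \int[lebesgue_measure]_(x in `[(- pi)%R, pi%R]) (f x)%:E)%E.
Proof.
move=> ha hd hp [f0 [fint fpos]] hsupp hn.
have mD := @measurable_itv R `[(- pi)%R, pi%R].
have mfE := measurable_int _ fint.
have mf : measurable_fun [set` `[(- pi)%R, pi%R]] f by apply/measurable_realfun.measurable_EFinP.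
have sa : 0 <= sin (alpha / 2) by apply: sin_ge0_pi; apply/andP; split; lra.
have sb : 0 <= sin (alpha / 2 + delta) by apply: sin_ge0_pi; apply/andP; split; lra.
have B0 : 0 <= 4 * sin (alpha / 2) ^+ n.-1 * sin (alpha / 2 + delta) ^+ n.-1.
  by rewrite !mulr_ge0 // exprn_ge0.
apply: ge_ereal_inf.
exists (\int[lebesgue_measure]_(x in `[(- pi)%R, pi%R])
   (err2 (aco alpha delta (n:=n)) (bco alpha delta (n:=n)) x * f x)%:E)%E.
  by exists (aco alpha delta (n:=n)), (bco alpha delta (n:=n)).
rewrite -ge0_integralZl //; last first.
- by move=> x _; exact: (f0 x).
apply: ge0_le_integral => //.
- move=> x _; rewrite lee_fin; apply: mulr_ge0 => //.
  by rewrite /err2 addr_ge0 // sqr_ge0.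
- apply/measurable_realfun.measurable_EFinP; apply: measurable_realfun.measurable_funM => //.
  exact: measurable_funTS (meas_err2 _ _).
- apply: emeasurable_funM => //; exact: measurable_cst.
move=> x Dx; rewrite -EFinM lee_fin.
have xin : x \in `[(- pi)%R, pi%R] by exact: Dx.
case: (pselect (in_Gamma alpha delta x)) => hg.
  by apply: ler_wpM2r => //; apply: pointwise.
by rewrite hsupp // !mulr0.
Qed.
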